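(* Let $n\ge 1$, $k\ge 1$ be integers, let $\lambda\in\mathbb{F}_{2^n}^*$, and let $f:\mathbb{F}_{2^n}\to\mathbb{F}_2$ be given by $f(x)=Tr(\lambda x^{2^k+1})$. Then $f$ is negabent if and only if $$\lambda^{2^{n-k}}a^{2^{n-k}}+\lambda a^{2^k}+a\neq 0\quad\text{for all } a\in\mathbb{F}_{2^n}^*.$$
   Context: $Tr=Tr_1^n:\mathbb{F}_{2^n}\to\mathbb{F}_2$ is the absolute trace, $Tr(x)=x+x^2+\dots+x^{2^{n-1}}$. Fix a self-dual basis $\{\alpha_1,\dots,\alpha_n\}$ of $\mathbb{F}_{2^n}$ over $\mathbb{F}_2$ (i.e. $Tr(\alpha_i\alpha_j)=\delta_{ij}$) and identify $x=\sum x_i\alpha_i$ with $(x_1,\dots,x_n)\in\mathbb{F}_2^n$, so that $Tr(xy)=\sum_i x_iy_i$; let $wt(x)$ be the number of nonzero coordinates $x_i$. For $f:\mathbb{F}_{2^n}\to\mathbb{F}_2$ the nega-Hadamard transform is $\mathcal{N}_f(\mu)=2^{-n/2}\sum_{x\in\mathbb{F}_{2^n}}(-1)^{f(x)+Tr(\mu x)}\,\mathrm{i}^{wt(x)}$ with $\mathrm{i}=\sqrt{-1}$, and $f$ is called negabent if $|\mathcal{N}_f(\mu)|=1$ for all $\mu\in\mathbb{F}_{2^n}$. *)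

(* Defs.v *)
From mathcomp Require Import all_boot all_order all_algebra all_field.
Set Implicit Arguments. Unset Strict Implicit. Unset Printing Implicit Defensive.
Import Order.TTheory GRing.Theory Num.Theory.
Local Open Scope ring_scope.

(* F plays the role of F_{2^n} (a finite field with #|F| = 2^n). *)

Definition Tr (F : finFieldType) (n : nat) (x : F) : F :=
  \sum_(i < n) x ^+ (2 ^ i).

(* the value Tr(x) in F_2, read as a boolean (Tr x is 0 or 1) *)
Definition trb (F : finFieldType) (n : nat) (x : F) : bool := Tr n x == 1.

Definition self_dual (F : finFieldType) (n : nat) (alpha : 'I_n -> F) : Prop :=
  forall i j : 'I_n, Tr n (alpha i * alpha j) = (i == j)%:R.

Definition coordinates (F : finFieldType) (n : nat) (alpha : 'I_n -> F)
  (coord : F -> 'I_n -> bool) : Prop :=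
  forall x : F, x = \sum_(i < n) (coord x i)%:R * alpha i.

Definition wt (F : finFieldType) (n : nat) (coord : F -> 'I_n -> bool) (x : F) : nat :=
  #|[set i : 'I_n | coord x i]|.

Definition nega_hadamard (F : finFieldType) (n : nat) (coord : F -> 'I_n -> bool)
  (f : F -> bool) (mu : F) : algC :=
  (sqrtC (2 ^+ n))^-1 *
  \sum_(x : F) (-1) ^+ (f x (+) trb n (mu * x)) * 'i ^+ (wt coord x).

Definition negabent (F : finFieldType) (n : nat) (coord : F -> 'I_n -> bool)
  (f : F -> bool) : Prop :=
  forall mu : F, `|nega_hadamard coord f mu| = 1.

(* Main.v *)
Require Import Defs.
From mathcomp Require Import all_boot all_order all_algebra all_field.
From mathcomp Require Import ring zify.
Import Order.TTheory GRing.Theory Num.Theory.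
Local Open Scope ring_scope.

Section Neg.
Variables (F : finFieldType) (n : nat) (alpha : 'I_n -> F) (coord : F -> 'I_n -> bool).
Hypotheses (hn : (1 <= n)%N) (hcard : #|F| = (2 ^ n)%N)
  (hsd : self_dual alpha) (hco : coordinates alpha coord).

Lemma ch2 : 2%N \in [pchar F].
Proof. exact: (card_finPcharP hcard). Qed.

Lemma two0 : (2%:R : F) = 0.
Proof. exact: pcharf0 ch2. Qed.

Lemma addxx (x : F) : x + x = 0.
Proof. by rewrite -mulr2n -mulr_natr two0 mulr0. Qed.

Lemma frob (x y : F) m : (x + y) ^+ (2 ^ m) = x ^+ (2 ^ m) + y ^+ (2 ^ m).
Proof.
elim: m => [|m IH]; first by rewrite !expr1.
rewrite expnSr !exprM IH sqrrD mulr2n addxx addr0.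
by [].
Qed.

Lemma fermat (x : F) : x ^+ (2 ^ n) = x.
Proof. by rewrite -hcard expf_card. Qed.

Lemma fermatj (x : F) j : x ^+ (2 ^ (n * j)) = x.
Proof.
elim: j => [|j IH]; first by rewrite muln0 expr1.
by rewrite mulnS expnD exprM fermat IH.
Qed.

Lemma TrD (x y : F) : Tr n (x + y) = Tr n x + Tr n y.
Proof. by rewrite /Tr -big_split; apply: eq_bigr => i _; rewrite frob. Qed.

Lemma Tr0 : Tr n (0 : F) = 0.
Proof. by rewrite /Tr big1 // => i _; rewrite expr0n expn_eq0. Qed.

Lemma Tr_sq (x : F) : Tr n (x ^+ 2) = Tr n x.
Proof.
rewrite /Tr; case: n hn fermat => [//|n'] _ hf.
rewrite big_ord_recr [RHS]big_ord_recl /= -exprM -expnS hf expn0 expr1 addrC.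
congr (_ + _); apply: eq_bigr => i _.
by rewrite -exprM -expnS.
Qed.

Lemma Tr_pow (x : F) j : Tr n (x ^+ (2 ^ j)) = Tr n x.
Proof.
elim: j => [|j IH]; first by rewrite expr1.
by rewrite expnSr exprM Tr_sq IH.
Qed.

Lemma Tr_sum (I : finType) (G : I -> F) : Tr n (\sum_i G i) = \sum_i Tr n (G i).
Proof. exact: (big_morph _ TrD Tr0). Qed.

Lemma Tr_bmul (c : bool) (x : F) : Tr n (c%:R * x) = c%:R * Tr n x.
Proof. by case: c; rewrite ?mul1r ?mul0r ?Tr0. Qed.

Lemma coordE (x : F) j : Tr n (x * alpha j) = (coord x j)%:R.
Proof.
rewrite {1}(hco x) mulr_suml Tr_sum (bigD1 j) //= big1 ?addr0.
  by rewrite -mulrA Tr_bmul hsd eqxx mulr1.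
by move=> i hij; rewrite -mulrA Tr_bmul hsd (negbTE hij) mulr0.
Qed.

Lemma bool_inj (a b : bool) : (a%:R : F) = b%:R -> a = b.
Proof.
case: a; case: b => //= h; have := oner_neq0 F.
  by rewrite -(mulr1n (1:F)) h eqxx.
by rewrite -(mulr1n (1:F)) -h eqxx.
Qed.

Lemma natr_xor (a b : bool) : ((a (+) b)%:R : F) = a%:R + b%:R.
Proof. by case: a; case: b; rewrite /= ?addr0 ?add0r ?addxx. Qed.

Lemma natr_odd m : (m%:R : F) = (odd m)%:R.
Proof. by rewrite -{1}(odd_double_half m) natrD -muln2 natrM two0 mulr0 addr0. Qed.

Lemma Tr_mul (x y : F) :
  Tr n (x * y) = (odd (\sum_j (coord x j && coord y j)))%:R.
Proof.
rewrite -natr_odd natr_sum {1}(hco y) mulr_sumr Tr_sum; apply: eq_bigr => j _.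
rewrite mulrCA Tr_bmul coordE -natrM; congr (_%:R).
by case: (coord x j); case: (coord y j).
Qed.

Lemma Tr_bool (x : F) : Tr n x = (trb n x)%:R.
Proof.
rewrite /trb; have := Tr_mul x 1; rewrite mulr1 => ->; set b := odd _.
case: b; first by rewrite mulr1n eqxx.
by rewrite mulr0n eq_sym (negbTE (oner_neq0 F)).
Qed.

Lemma trbD (x y : F) : trb n (x + y) = trb n x (+) trb n y.
Proof. by apply: bool_inj; rewrite natr_xor -!Tr_bool TrD. Qed.

Lemma trb0 : trb n (0 : F) = false.
Proof. by apply: bool_inj; rewrite -Tr_bool Tr0. Qed.

Lemma trb_mul (x y : F) : trb n (x * y) = odd (\sum_j (coord x j && coord y j)).
Proof. by apply: bool_inj; rewrite -Tr_bool Tr_mul. Qed.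

Lemma coord0 j : coord 0 j = false.
Proof. by apply: bool_inj; rewrite -coordE mul0r Tr0. Qed.

Lemma coordD (x y : F) j : coord (x + y) j = coord x j (+) coord y j.
Proof. by apply: bool_inj; rewrite natr_xor -!coordE mulrDl TrD. Qed.


Lemma TrFrob (lambda a x : F) k :
  Tr n (lambda * x ^+ (2 ^ k) * a) =
  Tr n (x * (lambda ^+ (2 ^ (n - k %% n)) * a ^+ (2 ^ (n - k %% n)))).
Proof.
rewrite -(Tr_pow _ (n - k %% n)) !exprMn -exprM -expnD.
have -> : (k + (n - k %% n) = n * (k %/ n).+1)%N.
  have h1 := ltn_pmod k hn; have h2 := divn_eq k n; rewrite mulnS; lia.
by rewrite fermatj; congr (Tr n _); ring.
Qed.

Lemma balanced (z : F) :
  \sum_(x : F) (-1) ^+ (trb n (x * z)) = (if z == 0 then (2 ^ n)%:R else 0) :> algC.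
Proof.
have [->|nz] := eqVneq z 0.
  under eq_bigr => x _ do rewrite mulr0 trb0 expr0.
  rewrite sumr_const ?eqxx -hcard; apply/eqP; rewrite eqr_nat; apply/eqP; exact: eq_card.
rewrite ?(negbTE nz); set X := (\sum_x _).
pose o := Ordinal hn.
pose c := alpha o * alpha o / z.
have hc : trb n (c * z) = true.
  by rewrite /c divfK // /trb hsd eqxx /= mulr1n eqxx.
have : X = - X.
  rewrite {1}/X (reindex_inj (addIr c)) /=.
  under eq_bigr => x _ do rewrite mulrDl trbD signr_addb hc expr1 mulrN1.
  by rewrite sumrN.
move/eqP; rewrite -addr_eq0 -mulr2n mulrn_eq0 /=.
by move/eqP.
Qed.


Definition cw (a : F) : algC := \prod_j (if coord a j then - 'i else 1).

Lemma wt_prod (x : F) : 'i ^+ (wt coord x) = \prod_j (if coord x j then 'i else 1) :> algC.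
Proof.
rewrite /wt -prodr_const big_mkcond; apply: eq_bigr => j _; by rewrite inE.
Qed.

Lemma wt_pair (x a : F) :
  'i ^+ (wt coord x) * ('i ^+ (wt coord (x + a)))^* = cw a * (-1) ^+ (trb n (x * a)) :> algC.
Proof.
rewrite !wt_prod rmorph_prod -big_split /= trb_mul signr_odd.
rewrite (big_morph (fun m => (-1) ^+ m : algC) (exprD (-1)) (expr0 _)) /cw -big_split /=.
apply: eq_bigr => j _; rewrite coordD.
case: (coord x j); case: (coord a j) => /=; rewrite ?conjCi ?rmorph1 ?mulr1 ?mul1r ?expr0 ?expr1 //.
  by rewrite mulrN1 opprK.
by rewrite mulrN -expr2 sqrCi opprK.
Qed.

Lemma cw_neq0 a : cw a != 0.
Proof.
apply/prodf_neq0 => j _; case: (coord a j); rewrite ?oppr_eq0 ?neq0Ci ?oner_neq0 //.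
Qed.

Lemma cw0 : cw 0 = 1.
Proof. by rewrite /cw big1 // => j _; rewrite coord0. Qed.


Lemma keyb (lambda mu x a : F) k :
  (trb n (lambda * x ^+ (2 ^ k + 1)) (+) trb n (mu * x))
    (+) (trb n (lambda * (x + a) ^+ (2 ^ k + 1)) (+) trb n (mu * (x + a)))
    (+) trb n (x * a)
  = (trb n (lambda * a ^+ (2 ^ k + 1)) (+) trb n (mu * a))
    (+) trb n (x * (lambda ^+ (2 ^ (n - k %% n)) * a ^+ (2 ^ (n - k %% n))
                    + lambda * a ^+ (2 ^ k) + a)).
Proof.
apply: bool_inj; rewrite !natr_xor -!Tr_bool.
have e1 : lambda * (x + a) ^+ (2 ^ k + 1) = lambda * x ^+ (2 ^ k + 1)
   + lambda * x ^+ (2 ^ k) * a + x * (lambda * a ^+ (2 ^ k)) + lambda * a ^+ (2 ^ k + 1).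
  by rewrite !exprD !expr1 frob; ring.
rewrite e1 !mulrDr !TrD TrFrob.
set A := Tr n (lambda * x ^+ _); set B := Tr n (mu * x).
by rewrite -[RHS]addr0 -(mulr0 (A + B)) -two0; ring.
Qed.


Definition Mk (lambda : F) k (a : F) := lambda ^+ (2 ^ (n - k %% n)) * a ^+ (2 ^ (n - k %% n))
                    + lambda * a ^+ (2 ^ k) + a.

Definition Sf (lambda : F) k (mu : F) : algC :=
  \sum_(x : F) (-1) ^+ (trb n (lambda * x ^+ (2 ^ k + 1)) (+) trb n (mu * x)) * 'i ^+ (wt coord x).

Definition Gf (lambda : F) k (mu : F) : algC :=
  \sum_(a : F | Mk lambda k a == 0)
     cw a * (-1) ^+ (trb n (lambda * a ^+ (2 ^ k + 1))) * (-1) ^+ (trb n (mu * a)).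

Lemma SS lambda k mu : Sf lambda k mu * (Sf lambda k mu)^* = (2 ^ n)%:R * Gf lambda k mu.
Proof.
rewrite {2}/Sf rmorph_sum /Sf big_distrl /=.
under eq_bigr => x _ do rewrite big_distrr /= (reindex_inj (addrI x)) /=.
rewrite exchange_big /Gf mulr_sumr [RHS]big_mkcond; apply: eq_bigr => a _ /=.
have term : forall x, (-1) ^+ (trb n (lambda * x ^+ (2 ^ k + 1)) (+) trb n (mu * x)) * 'i ^+ wt coord x *
    ((-1) ^+ (trb n (lambda * (x + a) ^+ (2 ^ k + 1)) (+) trb n (mu * (x + a))) * 'i ^+ wt coord (x + a))^*
    = (cw a * (-1) ^+ (trb n (lambda * a ^+ (2 ^ k + 1))) * (-1) ^+ (trb n (mu * a)))
      * (-1) ^+ (trb n (x * Mk lambda k a)) :> algC.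
  move=> x; rewrite rmorphM rmorph_sign mulrACA -signr_addb wt_pair mulrCA -signr_addb keyb.
  rewrite !signr_addb /Mk; ring.
under eq_bigr => x _ do rewrite term.
rewrite -mulr_sumr balanced -/(Mk lambda k a).
case: (Mk lambda k a == 0); last by rewrite !mulr0.
by rewrite mulrC.
Qed.


Lemma NN lambda k mu :
  let N := nega_hadamard coord (fun x : F => trb n (lambda * x ^+ (2 ^ k + 1))) mu in
  N * N^* = Gf lambda k mu.
Proof.
move=> N.
have -> : N = (sqrtC (2 ^+ n))^-1 * Sf lambda k mu by [].
have hs : 0 <= (sqrtC (2 ^+ n : algC))^-1 by rewrite invr_ge0 sqrtC_ge0 exprn_ge0 // ler0n.
rewrite rmorphM /= (geC0_conj hs) mulrACA SS -invfM -expr2 sqrtCK -natrX mulrA mulVf ?mul1r //.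
by rewrite pnatr_eq0 expn_eq0.
Qed.

Lemma norm1 (N : algC) : `|N| = 1 <-> N * N^* = 1.
Proof.
rewrite -normCK; split => [->|h]; first by rewrite expr1n.
by apply/eqP; rewrite -(sqrp_eq1 (normr_ge0 N)) h.
Qed.

Lemma Mk0 lambda k : Mk lambda k 0 = 0.
Proof. by rewrite /Mk !expr0n !expn_eq0 /= !mulr0 !addr0. Qed.

Lemma main (lambda : F) k : lambda != 0 ->
  negabent coord (fun x : F => trb n (lambda * x ^+ (2 ^ k + 1))) <->
  (forall a : F, a != 0 -> Mk lambda k a != 0).
Proof.
move=> hl; split.
  move=> hneg b bnz; apply/negP => /eqP hb.
  have G1 : forall mu, Gf lambda k mu = 1.
    by move=> mu; rewrite -NN; apply/norm1/hneg.
  have : \sum_(mu : F) Gf lambda k mu * (-1) ^+ (trb n (mu * b)) = 0.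
    under eq_bigr => mu _ do rewrite G1 mul1r.
    by rewrite balanced (negbTE bnz).
  rewrite /Gf.
  under eq_bigr => mu _ do rewrite mulr_suml.
  rewrite exchange_big /=.
  under eq_bigr => a _ do (under eq_bigr => mu _ do rewrite -mulrA -signr_addb -trbD -mulrDr).
  under eq_bigr => a _ do rewrite -mulr_sumr balanced.
  rewrite (bigD1 b) ?hb //= addxx eqxx big1 ?addr0.
    move/eqP; rewrite !mulf_eq0 (negbTE (cw_neq0 b)) !signr_eq0 pnatr_eq0 expn_eq0 /=.
    by [].
  move=> a /andP [_ hab]; case: eqP => [h|]; last by rewrite mulr0.
  have hab2 : a = b by apply: (addIr b); rewrite h addxx.
  by rewrite hab2 eqxx in hab.
move=> hM mu; apply/norm1; rewrite NN /Gf (bigD1 0) ?Mk0 //= big1 ?addr0.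
  by rewrite cw0 !mulr0 trb0 expr0n addn1 /= mulr0n mulr0 trb0 !expr0 !mulr1.
move=> a /andP [ha anz]; exfalso; move: (hM a anz); by rewrite ha.
Qed.

End Neg.

Theorem proposition2 (F : finFieldType) (n k : nat)
  (alpha : 'I_n -> F) (coord : F -> 'I_n -> bool) (lambda : F) :
  (1 <= n)%N -> (1 <= k)%N -> #|F| = (2 ^ n)%N ->
  self_dual alpha -> coordinates alpha coord ->
  lambda != 0 ->
  negabent coord (fun x : F => trb n (lambda * x ^+ (2 ^ k + 1))) <->
  (forall a : F, a != 0 ->
     lambda ^+ (2 ^ (n - k %% n)) * a ^+ (2 ^ (n - k %% n))
       + lambda * a ^+ (2 ^ k) + a != 0).
Proof.
move=> hn _ hcard hsd hco hl.
exact: (@main F n alpha coord hn hcard hsd hco lambda k hl).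
Qed.
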